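(* Let $W_0,W_1,W_2,\dots$ be the words over the alphabet $\{c_0,c_1,c_2,c_3\}$ defined by $W_k=c_k$ for $k=0,1,2,3$ and, recursively, $W_{2n+2}=W_0W_1W_2\cdots W_{2n}$ for $n\ge1$ and $W_{2n+1}=W_{2n-1}W_{2n-2}W_{2n-1}$ for $n\ge2$. Let $\sigma$ be the morphism $\sigma(c_0)=c_0c_1$, $\sigma(c_1)=c_2c_3$, $\sigma(c_2)=c_0c_1c_2$, $\sigma(c_3)=c_3c_2c_3$. Then for each $n\ge0$, $W_{2n+2}=\sigma^n(c_2)$ and $W_{2n+3}=\sigma^n(c_3)$.
   Context: In the paper, $W_k$ is the coding $\Psi(\Lambda_k)$ of the Lucas interval $\Lambda_k$ (where $\Lambda_0=[0,1]$, $\Lambda_{2n}=[L_{2n},L_{2n+1}]$, $\Lambda_{2n+1}=[L_{2n+1}+1,L_{2n+2}-1]$ for $n\ge1$, with Lucas numbers $L_0=2$, $L_1=1$, $L_n=L_{n-1}+L_{n-2}$); the statement above only depends on the recursive definition of the words. Juxtaposition denotes concatenation of words. *)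

(* Defs.v *)
From mathcomp Require Import all_boot.
Set Implicit Arguments. Unset Strict Implicit. Unset Printing Implicit Defensive.

Inductive letter := c0 | c1 | c2 | c3.

Definition word := seq letter.

Definition sigma_letter (a : letter) : word :=
  match a with
  | c0 => [:: c0; c1]
  | c1 => [:: c2; c3]
  | c2 => [:: c0; c1; c2]
  | c3 => [:: c3; c2; c3]
  end.

Definition sigma (w : word) : word := flatten (map sigma_letter w).

(* The recursive definition of the words W_k, as a predicate on a family
   W : nat -> word. The family is uniquely determined by these equations. *)
Definition is_W (W : nat -> word) : Prop :=
  [/\ W 0 = [:: c0], W 1 = [:: c1], W 2 = [:: c2], W 3 = [:: c3] &
      ((forall n, 1 <= n -> W (2 * n + 2) = flatten [seq W i | i <- iota 0 (2 * n + 1)])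
    /\ (forall n, 2 <= n -> W (2 * n + 1) = W (2 * n - 1) ++ W (2 * n - 2) ++ W (2 * n - 1)))].

(* Main.v *)
Require Import Defs.
From mathcomp Require Import all_boot.
From mathcomp Require Import zify.
From Stdlib Require Import Lia.
Set Bullet Behavior "Strict Subproofs".

Lemma sigma_cat a b : sigma (a ++ b) = sigma a ++ sigma b.
Proof. by rewrite /sigma map_cat flatten_cat. Qed.

Lemma shift_lem (W : nat -> word) m k :
  (forall i, m <= i < m + k -> sigma (W i) = W (i + 2)) ->
  sigma (flatten [seq W i | i <- iota m k]) = flatten [seq W i | i <- iota (m + 2) k].
Proof.
elim: k m => [|k IH] m H //=.
rewrite sigma_cat H; last by rewrite leqnn /= addnS ltnS leq_addr.
congr (_ ++ _).
have -> : (m + 2).+1 = m.+1 + 2 by rewrite addSn.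
apply: IH => i /andP [h1 h2]; apply: H.
by rewrite (ltnW h1) /= addnS.
Qed.

Lemma sigmaW (W : nat -> word) (hW : is_W W) :
  forall k j, 2 <= j <= k -> sigma (W j) = W (j + 2).
Proof.
case: hW => H0 H1 H2 H3 [He Ho].
elim=> [|k IH] j /andP [hj1 hj2].
  by move: (leq_trans hj1 hj2).
case: (ltnP j k.+1) => hjk; first by apply: IH; rewrite hj1 /= -ltnS.
have {hjk hj2} ej : j = k.+1 by apply/eqP; rewrite eqn_leq hj2 hjk.
subst j.
have [ev|od] := boolP (~~ odd k.+1).
-
  have := odd_double_half k.+1; rewrite (negbTE ev) add0n.
  move: (k.+1)./2 => h hk; case: h hk => [|[|n]] hk; first by rewrite -hk in hj1.
  + rewrite -hk /= H2 (He 1) //= H0 H1 H2 /sigma //=.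
  + have e1 : k.+1 = 2 * n.+1 + 2 by rewrite -hk -!muln2; lia.
    rewrite e1 (He n.+1) //.
    have -> : 2 * n.+1 + 2 + 2 = 2 * n.+2 + 2 by lia.
    rewrite (He n.+2) //.
    have -> : 2 * n.+1 + 1 = 2 + (2 * n + 1) by lia.
    have -> : 2 * n.+2 + 1 = 4 + (2 * n + 1) by lia.
    rewrite (iotaD 0 2) (iotaD 0 4) !map_cat !flatten_cat sigma_cat.
    rewrite [sigma (flatten [seq W i | i <- iota (0+2) _])]shift_lem.
      by rewrite /= H0 H1 H2 H3.
    move=> i /andP [hi1 hi2]; apply: IH; rewrite hi1 /=; lia.
- rewrite negbK in od.
  have := odd_double_half k.+1; rewrite od.
  move: (k.+1)./2 => h hk; case: h hk => [|[|n]] hk.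
  + by rewrite -hk in hj1.
  + by rewrite -hk /= H3 (Ho 2) //= H3 H2.
  + have e1 : k.+1 = 2 * n.+2 + 1 by rewrite -hk -!muln2; lia.
    rewrite e1 (Ho n.+2) //.
    have -> : 2 * n.+2 + 1 + 2 = 2 * n.+3 + 1 by lia.
    rewrite (Ho n.+3) // !sigma_cat.
    have -> : 2 * n.+3 - 1 = (2 * n.+2 - 1) + 2 by lia.
    have -> : 2 * n.+3 - 2 = (2 * n.+2 - 2) + 2 by lia.
    rewrite -!IH //; apply/andP; split; lia.
Qed.

Theorem lemma4 (W : nat -> word) (hW : is_W W) :
  forall n : nat,
    W (2 * n + 2) = iter n sigma [:: c2] /\ W (2 * n + 3) = iter n sigma [:: c3].
Proof.
have hW' := hW; case: hW' => H0 H1 H2 H3 _.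
elim=> [|n [IH1 IH2]] /=; first by rewrite H2 H3.
rewrite -IH1 -IH2 (sigmaW W hW (2 * n + 3)); last (apply/andP; split; lia).
rewrite (sigmaW W hW (2 * n + 3)); last (apply/andP; split; lia).
split; congr W; lia.
Qed.
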